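(* Let two users be at $(x_1,y_1,0),(x_2,y_2,0)$ with $-\frac{D_{\rm L}}{2}\le x_m\le\frac{D_{\rm L}}{2}$, ordered so that $y_1^2\le y_2^2$, let $d>0$, $\eta>0$, $\sigma^2>0$, and for an antenna at $(x,0,d)$ let $\delta_m(x)=(x-x_m)^2+y_m^2+d^2$. Define $$R_2^{\rm NOMA}=\log\left(1+\frac{\eta P_2}{\eta P_1+\sigma^2\delta_2(x)}\right),\quad R_0^{\rm NOMA}=\log\left(1+\frac{\eta P_2}{\eta P_1+\sigma^2\delta_1(x)}\right),\quad R_1^{\rm NOMA}=\log\left(1+\frac{\eta P_1}{\sigma^2\delta_1(x)}\right),$$ and consider $$\min_{P_1,P_2\ge0,\ x}\ P_1+P_2\quad\text{s.t.}\quad R_m^{\rm NOMA}\ge R\ (m=0,1,2),\quad -\frac{D_{\rm L}}{2}\le x\le\frac{D_{\rm L}}{2}.$$ If $R\ge\frac12$, then an optimal solution is $$x^*=\frac{x_2}{e^R+1}+\frac{e^Rx_1}{e^R+1},\quad P_1^*=\tilde\epsilon(x^*-x_1)^2+\tilde\tau_1,\quad P_2^*=\frac{\tilde\epsilon\eta}{\sigma^2}P_1^*+\tilde\epsilon(x^*-x_2)^2+\tilde\tau_2,$$ where $\tilde\epsilon=\frac{\sigma^2}{\eta}(e^R-1)$ and $\tilde\tau_m=\tilde\epsilon(y_m^2+d^2)$.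
   Context: Two-user power-domain NOMA with a single pinching antenna at $(x,0,d)$ on a waveguide of height $d$; user 1 performs successive interference cancellation: it first decodes user 2's signal (rate $R_0^{\rm NOMA}$), then its own (rate $R_1^{\rm NOMA}$); user 2 decodes its own signal treating user 1's as interference (rate $R_2^{\rm NOMA}$). $P_m$ is the power for user $m$'s signal, $R$ is the target rate, $\log$ is natural. *)

(* Defs.v *)
From Stdlib Require Import Reals.
Open Scope R_scope.

Definition delta (xm ym d x : R) : R := (x - xm)^2 + ym^2 + d^2.

Definition R2_NOMA (eta sigma2 P1 P2 x2 y2 d x : R) : R :=
  ln (1 + eta * P2 / (eta * P1 + sigma2 * delta x2 y2 d x)).
Definition R0_NOMA (eta sigma2 P1 P2 x1 y1 d x : R) : R :=
  ln (1 + eta * P2 / (eta * P1 + sigma2 * delta x1 y1 d x)).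
Definition R1_NOMA (eta sigma2 P1 x1 y1 d x : R) : R :=
  ln (1 + eta * P1 / (sigma2 * delta x1 y1 d x)).

Definition feasible (DL eta sigma2 d Rt x1 y1 x2 y2 P1 P2 x : R) : Prop :=
  0 <= P1 /\ 0 <= P2 /\
  R0_NOMA eta sigma2 P1 P2 x1 y1 d x >= Rt /\
  R1_NOMA eta sigma2 P1 x1 y1 d x >= Rt /\
  R2_NOMA eta sigma2 P1 P2 x2 y2 d x >= Rt /\
  - DL / 2 <= x <= DL / 2.

Definition optimal (DL eta sigma2 d Rt x1 y1 x2 y2 P1 P2 x : R) : Prop :=
  feasible DL eta sigma2 d Rt x1 y1 x2 y2 P1 P2 x /\
  forall P1' P2' x', feasible DL eta sigma2 d Rt x1 y1 x2 y2 P1' P2' x' ->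
    P1 + P2 <= P1' + P2'.

(* Main.v *)
Require Import Defs.
From Stdlib Require Import Reals Lra Psatz.
Open Scope R_scope.

Lemma ln_le' (x y : R) : 0 < x -> x <= y -> ln x <= ln y.
Proof. intros Hx H. destruct (Rle_lt_or_eq_dec x y H) as [h|h].
  - left. apply ln_increasing; assumption.
  - rewrite h; lra. Qed.

Lemma ln_ge_inv (y r : R) : r > 0 -> ln y >= r -> y >= exp r.
Proof.
  intros Hr H.
  destruct (Rlt_dec 0 y) as [Hy|Hy].
  - rewrite <- (exp_ln y Hy). apply Rle_ge. destruct (Rle_lt_or_eq_dec r (ln y)) as [h|h]; [lra| left; apply exp_increasing; exact h | rewrite h; lra].
  - exfalso. unfold ln in H. destruct (Rlt_dec 0 y); [contradiction|lra].
Qed.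

Lemma div_ge (a b c : R) : 0 < b -> a / b >= c -> a >= c * b.
Proof.
  intros Hb H. apply Rle_ge. apply Rge_le in H.
  apply (Rmult_le_compat_r b) in H; [|lra].
  replace (a / b * b) with a in H by (field; lra). lra.
Qed.

Theorem lemma6 (DL d eta sigma2 Rt x1 y1 x2 y2 : R) :
  - DL / 2 <= x1 <= DL / 2 ->
  - DL / 2 <= x2 <= DL / 2 ->
  y1 ^ 2 <= y2 ^ 2 ->
  0 < d -> 0 < eta -> 0 < sigma2 ->
  Rt >= 1 / 2 ->
  let eps := sigma2 / eta * (exp Rt - 1) in
  let tau1 := eps * (y1 ^ 2 + d ^ 2) in
  let tau2 := eps * (y2 ^ 2 + d ^ 2) in
  let xs := x2 / (exp Rt + 1) + exp Rt * x1 / (exp Rt + 1) in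
  let P1s := eps * (xs - x1) ^ 2 + tau1 in
  let P2s := eps * eta / sigma2 * P1s + eps * (xs - x2) ^ 2 + tau2 in
  optimal DL eta sigma2 d Rt x1 y1 x2 y2 P1s P2s xs.
Proof.
  intros Hx1 Hx2 Hy Hd He Hs HR eps tau1 tau2 xs P1s P2s.
  assert (HE : exp Rt > 1).
  { rewrite <- exp_0. apply exp_increasing. lra. }
  set (E := exp Rt) in *.
  assert (Heps : eps = sigma2 / eta * (E - 1)) by reflexivity.
  assert (Hxs : xs = (x2 + E * x1) / (E + 1)) by (unfold xs; field; lra).
  assert (Hd1 : forall x, delta x1 y1 d x > 0).
  { intro x; unfold delta. pose proof (pow2_ge_0 (x - x1)). pose proof (pow2_ge_0 (x - x2)). pose proof (pow2_ge_0 y1). pose proof (pow2_ge_0 y2). assert (0 < d ^ 2) by (apply pow_lt; lra). lra. }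
  assert (Hd2 : forall x, delta x2 y2 d x > 0).
  { intro x; unfold delta. pose proof (pow2_ge_0 (x - x1)). pose proof (pow2_ge_0 (x - x2)). pose proof (pow2_ge_0 y1). pose proof (pow2_ge_0 y2). assert (0 < d ^ 2) by (apply pow_lt; lra). lra. }
  assert (HP1 : P1s = eps * delta x1 y1 d xs) by (unfold P1s, tau1, delta; ring).
  assert (Hexs : eps * eta / sigma2 = E - 1) by (rewrite Heps; field; lra).
  assert (HP2 : P2s = (E - 1) * P1s + eps * delta x2 y2 d xs).
  { unfold P2s, tau2, delta. rewrite Hexs. ring. }
  assert (Hepsp : eps > 0).
  { rewrite Heps. apply Rmult_gt_0_compat; [apply Rdiv_lt_0_compat|]; lra. }
  assert (Hdd : delta x1 y1 d xs <= delta x2 y2 d xs).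
  { unfold delta.
    assert (A : xs - x1 = (x2 - x1) / (E + 1)) by (rewrite Hxs; field; lra).
    assert (B : xs - x2 = E * (x1 - x2) / (E + 1)) by (rewrite Hxs; field; lra).
    rewrite A, B.
    set (u := (x2 - x1)).
    replace (E * (x1 - x2) / (E + 1)) with (- E * (u / (E + 1))) by (unfold u; field; lra).
    set (v := u / (E + 1)). assert (0 <= (E*E - 1) * (v*v)) by (apply Rmult_le_pos; nra). nra. }
  split.
  - unfold feasible, R0_NOMA, R1_NOMA, R2_NOMA.
    pose proof (Hd1 xs). pose proof (Hd2 xs).
    assert (P1pos : 0 <= P1s) by (rewrite HP1; nra).
    assert (P2pos : 0 <= P2s) by (rewrite HP2; nra).
    split; [exact P1pos|]. split; [exact P2pos|].
    split; [|split; [|split]].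
    + apply Rle_ge. rewrite <- (ln_exp Rt). fold E. apply ln_le'; [lra|].
      apply Rge_le.
      assert (Hden : eta * P1s + sigma2 * delta x1 y1 d xs > 0) by nra.
      assert (eta * P2s / (eta * P1s + sigma2 * delta x1 y1 d xs) >= E - 1); [|lra].
      apply Rle_ge. apply Rmult_le_reg_r with (eta * P1s + sigma2 * delta x1 y1 d xs); [lra|].
      replace (eta * P2s / (eta * P1s + sigma2 * delta x1 y1 d xs) *
               (eta * P1s + sigma2 * delta x1 y1 d xs)) with (eta * P2s) by (field; lra).
      rewrite HP2. rewrite Heps.
      replace (eta * ((E - 1) * P1s + sigma2 / eta * (E - 1) * delta x2 y2 d xs))
        with ((E - 1) * (eta * P1s + sigma2 * delta x2 y2 d xs)) by (field; lra).
      apply Rmult_le_compat_l; nra.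
    + replace (1 + eta * P1s / (sigma2 * delta x1 y1 d xs)) with E.
      * unfold E; rewrite ln_exp. lra.
      * rewrite HP1, Heps. field. split; lra.
    + replace (1 + eta * P2s / (eta * P1s + sigma2 * delta x2 y2 d xs)) with E.
      * unfold E; rewrite ln_exp. lra.
      * rewrite HP2, Heps. field. split; nra.
    + rewrite Hxs. split.
      * apply Rmult_le_reg_r with (E + 1); [lra|].
        replace ((x2 + E * x1) / (E + 1) * (E + 1)) with (x2 + E * x1) by (field; lra). nra.
      * apply Rmult_le_reg_r with (E + 1); [lra|].
        replace ((x2 + E * x1) / (E + 1) * (E + 1)) with (x2 + E * x1) by (field; lra). nra.
  - intros P1 P2 x [H1 [H2 [H0r [H1r [H2r Hxr]]]]].
    unfold R0_NOMA, R1_NOMA, R2_NOMA in *.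
    pose proof (Hd1 x). pose proof (Hd2 x).
    apply ln_ge_inv in H1r; [|lra]. apply ln_ge_inv in H2r; [|lra].
    fold E in H1r, H2r.
    assert (A1 : eta * P1 >= (E - 1) * (sigma2 * delta x1 y1 d x)).
    { apply div_ge; [nra|lra]. }
    assert (A2 : eta * P2 >= (E - 1) * (eta * P1 + sigma2 * delta x2 y2 d x)).
    { apply div_ge; [nra|lra]. }
    assert (B1 : P1 >= eps * delta x1 y1 d x).
    { rewrite Heps. apply Rle_ge. apply Rmult_le_reg_l with eta; [lra|].
      replace (eta * (sigma2 / eta * (E - 1) * delta x1 y1 d x))
        with ((E - 1) * (sigma2 * delta x1 y1 d x)) by (field; lra). lra. }
    assert (B2 : P2 >= (E - 1) * P1 + eps * delta x2 y2 d x).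
    { rewrite Heps. apply Rle_ge. apply Rmult_le_reg_l with eta; [lra|].
      replace (eta * ((E - 1) * P1 + sigma2 / eta * (E - 1) * delta x2 y2 d x))
        with ((E - 1) * (eta * P1 + sigma2 * delta x2 y2 d x)) by (field; lra). lra. }
    assert (Q : E * delta x1 y1 d xs + delta x2 y2 d xs <= E * delta x1 y1 d x + delta x2 y2 d x).
    { assert (Id : E * delta x1 y1 d x + delta x2 y2 d x
                   - (E * delta x1 y1 d xs + delta x2 y2 d xs) = (E + 1) * (x - xs) ^ 2).
      { unfold delta. rewrite Hxs. field. lra. }
      assert (0 <= (E + 1) * (x - xs) ^ 2) by (apply Rmult_le_pos; [lra|apply pow2_ge_0]).
      lra. }
    rewrite HP2, HP1.
    assert (0 <= E * (P1 - eps * delta x1 y1 d x)) by (apply Rmult_le_pos; lra).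
    assert (0 <= eps * (E * delta x1 y1 d x + delta x2 y2 d x - (E * delta x1 y1 d xs + delta x2 y2 d xs))) by (apply Rmult_le_pos; lra).
    nra.
Qed.
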